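(* Let $\odot$ be a non-degenerate pseudo-multiplication on $[0,\infty]$ with left identity $1_{\odot}$. For $t\in[0,\infty]$ the following conditions are equivalent: (1) $t$ is $\odot$-finite; (2) $s\odot t$ is $\odot$-finite for some $s>0$; (3) $s\odot t\leqslant 1_{\odot}$ for some $s>0$; (4) $t\odot s'\leqslant 1_{\odot}$ for some $s'>0$; (5) $t\odot s'$ is $\odot$-finite for some $s'>0$.
   Context: A pseudo-multiplication is a binary operation $\odot:[0,\infty]\times[0,\infty]\to[0,\infty]$ such that: $\odot$ is associative; $\odot$ is continuous on $(0,\infty)\times[0,\infty]$; for every $t$, the map $s\mapsto s\odot t$ is continuous on $(0,\infty]$; $\odot$ is nondecreasing in each argument; there is a left identity element $1_{\odot}$, i.e. $1_{\odot}\odot t=t$ for all $t$; there are no zero divisors, i.e. $s\odot t=0$ implies $s=0$ or $t=0$; and $0$ is an annihilator, i.e. $0\odot t=t\odot 0=0$ for all $t$. For $t\in[0,\infty]$ put $O(t)=\inf_{s>0} s\odot t$. An element $t$ is called $\odot$-finite if $O(t)=0$, and $\odot$-infinite otherwise. The pseudo-multiplication $\odot$ is called non-degenerate if $O(1_{\odot})=0$. *)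

(* Defs.v *)
(* [0,oo] is modelled inside the extended reals \bar R. *)
From HB Require Import structures.
From mathcomp Require Import all_boot all_order all_algebra.
From mathcomp Require Import all_classical all_reals all_analysis.
Set Implicit Arguments. Unset Strict Implicit. Unset Printing Implicit Defensive.
Import Order.TTheory GRing.Theory Num.Theory.
Local Open Scope classical_set_scope.
Local Open Scope ereal_scope.

Section PseudoMult.
Context {R : realType}.

Definition nnE : set (\bar R) := [set x | 0 <= x].

Record is_pseudo_mult (op : \bar R -> \bar R -> \bar R) (e : \bar R) : Prop := {
  pm_ge0 : forall s t, 0 <= s -> 0 <= t -> 0 <= op s t;
  pm_assoc : forall s t u, 0 <= s -> 0 <= t -> 0 <= u -> op (op s t) u = op s (op t u);
  pm_cont : {within [set p : \bar R * \bar R | (0 < p.1 < +oo) && (0 <= p.2)],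
               continuous (fun p : \bar R * \bar R => op p.1 p.2)};
  pm_cont_l : forall t, 0 <= t ->
     {within [set s : \bar R | 0 < s], continuous (fun s => op s t)};
  pm_monol : forall s s' t, 0 <= s -> s <= s' -> 0 <= t -> op s t <= op s' t;
  pm_monor : forall s t t', 0 <= s -> 0 <= t -> t <= t' -> op s t <= op s t';
  pm_e_ge0 : 0 <= e;
  pm_lid : forall t, 0 <= t -> op e t = t;
  pm_nozd : forall s t, 0 <= s -> 0 <= t -> op s t = 0 -> s = 0 \/ t = 0;
  pm_0l : forall t, 0 <= t -> op 0 t = 0;
  pm_0r : forall t, 0 <= t -> op t 0 = 0 }.

Definition Oinf (op : \bar R -> \bar R -> \bar R) (t : \bar R) : \bar R :=
  ereal_inf [set op s t | s in [set s : \bar R | 0 < s]].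

Definition pm_finite op (t : \bar R) : Prop := Oinf op t = 0.

Definition pm_nondegenerate op (e : \bar R) : Prop := Oinf op e = 0.

End PseudoMult.

(* Main.v *)
Require Import Defs.
From HB Require Import structures.
From mathcomp Require Import all_boot all_order all_algebra.
From mathcomp Require Import all_classical all_reals all_analysis.
Import Order.TTheory GRing.Theory Num.Theory.
Local Open Scope ereal_scope.

Section Aux.
Context (R : realType) (op : \bar R -> \bar R -> \bar R) (e : \bar R)
  (Hpm : is_pseudo_mult op e) (Hnd : pm_nondegenerate op e).
Local Open Scope classical_set_scope.

Lemma e_gt0 : 0 < e.
Proof.
rewrite lt_def (pm_e_ge0 Hpm) andbT; apply/eqP => e0.
have := pm_lid Hpm (lee01 : (0 : \bar R) <= 1).
rewrite e0 (pm_0l Hpm) ?lee01 //.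
by move=> /eqP; rewrite eqe eq_sym oner_eq0.
Qed.

Lemma pos_op {s t} : 0 < s -> 0 < t -> 0 < op s t.
Proof.
move=> s0 t0; have s0' := ltW s0; have t0' := ltW t0; rewrite lt_def (pm_ge0 Hpm) // andbT; apply/eqP => h.
by case: (pm_nozd Hpm (ltW s0) (ltW t0) h) => h0; [rewrite h0 ltxx in s0|rewrite h0 ltxx in t0].
Qed.

Lemma O_ge0 {t} : 0 <= t -> 0 <= Oinf op t.
Proof. by move=> t0; apply/ereal_infP => _ [s s0 <-]; apply: (pm_ge0 Hpm) => //; exact: ltW. Qed.

Lemma O_le s t : 0 < s -> Oinf op t <= op s t.
Proof. by move=> s0; apply: ereal_inf_lbound; exists s. Qed.


Lemma O_mono {a b} : 0 <= a -> a <= b -> Oinf op a <= Oinf op b.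
Proof.
move=> a0 ab; apply/ereal_infP => _ [s s0 <-]; apply: le_trans (O_le s a s0) _.
by apply: (pm_monor Hpm) => //; exact: ltW.
Qed.

Lemma O_left {s t} : 0 < s -> 0 <= t -> Oinf op t <= Oinf op (op s t).
Proof.
move=> s0 t0; apply/ereal_infP => _ [r r0 <-].
have r0' := ltW r0; have s0' := ltW s0.
rewrite -(pm_assoc Hpm) //; apply: O_le; exact: pos_op.
Qed.

Lemma fin_of_le0 {t} : 0 <= t -> Oinf op t <= 0 -> pm_finite op t.
Proof. by move=> t0 h; apply/eqP; rewrite eq_le h O_ge0. Qed.

Lemma fin_small {t} : pm_finite op t -> forall x, 0 < x -> exists2 u, 0 < u & op u t < x.
Proof.
move=> Ht x x0; have : Oinf op t < x by rewrite Ht.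
by move/ereal_inf_lt => [_ [u u0 <-] h]; exists u.
Qed.

Lemma fin_le_e {t} : pm_finite op t -> exists2 u, 0 < u & op u t <= e.
Proof. by move=> Ht; have [u u0 h] := fin_small Ht e e_gt0; exists u => //; exact: ltW. Qed.

Lemma five_one {t s} : 0 <= t -> 0 < s -> pm_finite op (op t s) -> pm_finite op t.
Proof.
move=> t0 s0 H; have a0 : 0 <= Oinf op t := O_ge0 t0.
have h : op (Oinf op t) s <= Oinf op (op t s).
  apply/ereal_infP => _ [r r0 <-].
  have r0' := ltW r0; have s0' := ltW s0.
  rewrite -(pm_assoc Hpm) //; apply: (pm_monol Hpm) => //.
  exact: O_le.
rewrite H in h.
have s0' := ltW s0.
have : op (Oinf op t) s = 0 by apply/eqP; rewrite eq_le h (pm_ge0 Hpm).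
by case/(pm_nozd Hpm a0 (ltW s0)) => // s00; rewrite s00 ltxx in s0.
Qed.

Lemma one_four {t} : 0 <= t -> pm_finite op t -> exists2 y, 0 < y & op t y <= e.
Proof.
move=> t0 Ht.
have [s s0 hs] := fin_small Ht 1 (lte01 : (0 : \bar R) < 1).
have [c0|cpos] : op s t = 0 \/ 0 < op s t.
  by case: (ltgtP (op s t) 0) => [h|h|h]; [rewrite ltNge (pm_ge0 Hpm) // in h; exact: ltW|right|left].
  case: (pm_nozd Hpm (ltW s0) t0 c0) => [s00|->]; first by rewrite s00 ltxx in s0.
  by exists 1; [exact: lte01| rewrite (pm_0l Hpm) ?lee01 // (pm_e_ge0 Hpm)].
set c := op s t in hs cpos.
have [d d0 dle] : exists2 d : R, (0 < d)%R & d%:E <= op s e.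
  have := pos_op s0 e_gt0; case: (op s e) => [r| |] //= r0.
  - by exists r.
  - by exists 1%R => //; rewrite leey.
pose A := [set p : \bar R * \bar R | (0 < p.1 < +oo) && (0 <= p.2)]%classic.
have cfin : c < +oo by apply: lt_trans hs _; exact: ltry.
have Ax : A (c, 0) by rewrite /A /= cpos cfin /=.
pose g := fun n : nat => (c, (harmonic n : R)%:E).
have gA : forall n, A (g n).
  by move=> n; rewrite /A /g /= cpos cfin /= lee_fin harmonic_ge0.
have gcv : g n @[n --> \oo] --> ((c, 0) : subspace A).
  apply/subspace_cvgP => //.
  have gn : g n @[n --> \oo] --> (c, 0).
    have h1 : (fun _ : nat => c) n @[n --> \oo] --> c by apply: cvg_cst.
    have h2 : (harmonic n : R)%:E @[n --> \oo] --> (0 : \bar R) := cvge_harmonic.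
    exact: (cvg_pair h1 h2).
  move=> P /= HP; have [N _ HN] := gn _ HP; exists N => // n /HN /=; apply; exact: gA.
have hc := cvg_comp _ _ gcv (@pm_cont _ _ _ Hpm (c, 0)).
have H2 : nbhs ((from_subspace A (fun p : \bar R * \bar R => op p.1 p.2)) (c, 0))
   [set y | y < d%:E].
  rewrite /from_subspace /= (pm_0r Hpm); last exact: ltW.
  exact: (@nbhs_open_ereal_lt R 0%R (fun=> d)).
have [N _ HN] := hc _ H2.
have := HN N (leqnn N); rewrite /= => hN.
exists (harmonic N : R)%:E; first by rewrite lte_fin harmonic_gt0.
rewrite leNgt; apply/negP => hlt.
have : op s e <= op s (op t (harmonic N : R)%:E).
  apply: (pm_monor Hpm); [exact: ltW| exact: (pm_e_ge0 Hpm) | exact: ltW].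
have s0' := ltW s0; have hN0 : 0 <= (harmonic N : R)%:E by rewrite lee_fin harmonic_ge0.
rewrite -(pm_assoc Hpm) // -/c => h.
have := lt_le_trans hN (le_trans dle h); by rewrite ltxx.
Qed.

End Aux.
Arguments e_gt0 {R op e} Hpm. Arguments pos_op {R op e} Hpm {s t}. Arguments O_mono {R op e} Hpm {a b}. Arguments O_left {R op e} Hpm {s t}. Arguments fin_of_le0 {R op e} Hpm {t}. Arguments fin_le_e {R op e} Hpm {t}. Arguments five_one {R op e} Hpm {t s}. Arguments one_four {R op e} Hpm {t}.

Theorem proposition2p4 (R : realType) (op : \bar R -> \bar R -> \bar R) (e : \bar R)
  (Hpm : is_pseudo_mult op e) (Hnd : pm_nondegenerate op e)
  (t : \bar R) (ht : 0 <= t) :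
  [<-> pm_finite op t;
       exists2 s, 0 < s & pm_finite op (op s t);
       exists2 s, 0 < s & op s t <= e;
       exists2 s', 0 < s' & op t s' <= e;
       exists2 s', 0 < s' & pm_finite op (op t s')].
Proof.

have e0 := e_gt0 Hpm.
tfae.
- by move=> H; exists e => //; rewrite (pm_lid Hpm).
- move=> [s s0 H]; have [r r0 hr] := fin_le_e Hpm H.
  exists (op r s); first exact: (pos_op Hpm r0 s0).
  have r0' := ltW r0; have s0' := ltW s0.
  by rewrite (pm_assoc Hpm).
- move=> [s s0 H]; apply: (one_four Hpm) => //.
  apply: (fin_of_le0 Hpm) => //; apply: le_trans (O_left Hpm s0 ht) _.
  rewrite -Hnd; apply: (O_mono Hpm) => //; apply: (pm_ge0 Hpm) => //; exact: ltW.
- move=> [s s0 H]; exists s => //; apply: (fin_of_le0 Hpm).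
    apply: (pm_ge0 Hpm) => //; exact: ltW.
  rewrite -Hnd; apply: (O_mono Hpm) => //; apply: (pm_ge0 Hpm) => //; exact: ltW.
- by move=> [s s0 H]; exact: (five_one Hpm ht s0 H).
Qed.
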